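(* Let $X=\mathrm{Bl}_{x_0}\mathbb{P}^2$ with hyperplane class $H$ and exceptional divisor $E$, $b>1$, $\beta=b[H]-[E]$, $p\in\mathbb{R}$, and for $s<pb$ let $\tilde\alpha_s=p[H]-s[E]$ and $\tilde c_s=\frac{p^2-s^2-b^2+1}{2(pb-s)}=\frac{\tilde\alpha_s^2-\beta^2}{2\tilde\alpha_s\cdot\beta}$. Then $$\tilde c_s<\min\Big(\frac pb,\ \frac{p-s}{b-1},\ bp\Big).$$ In particular: (1) $\tilde\alpha_s-\tilde c_s\beta$ is a big class, and it is Kähler (resp. nef) if and only if $s>\tilde c_s$ (resp. $s\ge\tilde c_s$); (2) $(X,\tilde\alpha_s,\beta)$ is dHYM-stable (resp. semi-stable) if and only if $s>\tilde c_s$ (resp. $s\ge\tilde c_s$).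
   Context: For a class $\alpha$ with $\alpha\cdot\beta\neq0$ the dHYM angle satisfies $\cot\vartheta=\frac{\alpha^2-\beta^2}{2\alpha\cdot\beta}$. $(X,\alpha,\beta)$ is dHYM-stable if for every Kähler class $\gamma$ and $k=1,2$, $\mathrm{Re}(\alpha+\sqrt{-1}\beta)^k\cdot\gamma^{2-k}\ge\cot\vartheta\,\mathrm{Im}(\alpha+\sqrt{-1}\beta)^k\cdot\gamma^{2-k}$, and for every curve $Z$, $\mathrm{Re}(\alpha+\sqrt{-1}\beta)\cdot Z>\cot\vartheta\,\mathrm{Im}(\alpha+\sqrt{-1}\beta)\cdot Z$; dHYM-semi-stable is the same with all inequalities non-strict. *)

(* Defs.v *)
From Stdlib Require Import Reals Lra List.
Open Scope R_scope.

(* Model of H^{1,1}(X,R) for X = Bl_{x0} P^2: the class  ch*[H] + ce*[E]. *)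
Record cls := mkcls { ch : R ; ce : R }.

Definition clsH : cls := mkcls 1 0.
Definition clsE : cls := mkcls 0 1.
Definition cadd (u v : cls) : cls := mkcls (ch u + ch v) (ce u + ce v).
Definition cscale (t : R) (u : cls) : cls := mkcls (t * ch u) (t * ce u).
Definition csub (u v : cls) : cls := cadd u (cscale (-1) v).

(* Intersection form: H^2 = 1, E^2 = -1, H.E = 0. *)
Definition dot (u v : cls) : R := ch u * ch v - ce u * ce v.

(* Classes of irreducible curves on X: the exceptional curve E, and the strict
   transforms d[H] - m[E] of irreducible plane curves of degree d >= 1 having
   multiplicity m at x0 (0 <= m <= d, with m = d only for lines, d = 1). *)
Definition curve_class (Z : cls) : Prop :=
  Z = clsE \/
  exists d m : nat, (1 <= d)%nat /\ (m <= d)%nat /\ ((m < d)%nat \/ d = 1%nat) /\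
    Z = mkcls (INR d) (- INR m).

Definition nef (g : cls) : Prop := forall Z, curve_class Z -> 0 <= dot g Z.

(* Kähler (= ample, as h^{2,0}(X)=0): Nakai–Moishezon criterion. *)
Definition kahler (g : cls) : Prop :=
  0 < dot g g /\ forall Z, curve_class Z -> 0 < dot g Z.

Definition effective (D : cls) : Prop :=
  exists l : list (R * cls),
    Forall (fun q => 0 <= fst q /\ curve_class (snd q)) l /\
    D = fold_right (fun q acc => cadd (cscale (fst q) (snd q)) acc) (mkcls 0 0) l.

Definition big (g : cls) : Prop :=
  exists A D, kahler A /\ effective D /\ g = cadd A D.

Definition cot_dHYM (a b : cls) : R := (dot a a - dot b b) / (2 * dot a b).

(* Re / Im of (alpha + i beta)^k . gamma^(2-k), k = 1, 2. *)
Definition Re1 (a b g : cls) : R := dot a g.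
Definition Im1 (a b g : cls) : R := dot b g.
Definition Re2 (a b : cls) : R := dot a a - dot b b.
Definition Im2 (a b : cls) : R := 2 * dot a b.

Definition dHYM_stable (a b : cls) : Prop :=
  (forall g, kahler g ->
     Re1 a b g >= cot_dHYM a b * Im1 a b g /\
     Re2 a b >= cot_dHYM a b * Im2 a b) /\
  (forall Z, curve_class Z -> dot a Z > cot_dHYM a b * dot b Z).

Definition dHYM_semistable (a b : cls) : Prop :=
  (forall g, kahler g ->
     Re1 a b g >= cot_dHYM a b * Im1 a b g /\
     Re2 a b >= cot_dHYM a b * Im2 a b) /\
  (forall Z, curve_class Z -> dot a Z >= cot_dHYM a b * dot b Z).

(* Main.v *)
Require Import Defs.
From Stdlib Require Import Reals.
From Stdlib Require Import Lra Psatz List.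
Open Scope R_scope.

Lemma curve_dot (x y : R) (Z : cls) : 0 <= y -> y <= x -> 0 < x ->
  curve_class Z -> 0 <= dot (mkcls x (- y)) Z /\ (0 < y -> y < x -> 0 < dot (mkcls x (- y)) Z).
Proof.
  intros hy hxy hx [-> | [d [m [hd [hm [_ ->]]]]]]; unfold dot, clsE; simpl.
  - split; intros; lra.
  - apply le_INR in hd; apply le_INR in hm. simpl in hd.
    assert (E : x * INR d - - y * - INR m = INR d * (x - y) + (INR d - INR m) * y) by ring.
    rewrite E. split.
    + assert (0 <= INR d * (x - y)) by (apply Rmult_le_pos; lra).
      assert (0 <= (INR d - INR m) * y) by (apply Rmult_le_pos; lra). lra.
    + intros. assert (0 < INR d * (x - y)) by (apply Rmult_lt_0_compat; lra).
      assert (0 <= (INR d - INR m) * y) by (apply Rmult_le_pos; lra). lra.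
Qed.

Lemma pos_of_mul (a x : R) : 0 < a -> 0 < a * x -> 0 < x.
Proof. intros ha h. destruct (Rle_or_lt x 0) as [H|H]; auto.
  assert (a * x <= 0) by (rewrite <- (Rmult_0_r a); apply Rmult_le_compat_l; lra). lra. Qed.

Lemma nonneg_of_mul (a x : R) : 0 < a -> 0 <= a * x -> 0 <= x.
Proof. intros ha h. destruct (Rle_or_lt 0 x) as [H|H]; auto.
  assert (a * x < 0) by (rewrite <- (Rmult_0_r a); apply Rmult_lt_compat_l; lra). lra. Qed.

Lemma curveE : curve_class clsE.
Proof. left; reflexivity. Qed.

Lemma curveL : curve_class (mkcls 1 (-1)).
Proof. right. exists 1%nat, 1%nat. simpl. repeat split; auto. Qed.

Lemma kahler_xy (x y : R) : 0 < y -> y < x -> kahler (mkcls x (- y)).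
Proof.
  intros hy hxy. split.
  - unfold dot; simpl. nra.
  - intros Z hZ. apply (curve_dot x y Z); auto; lra.
Qed.

Theorem lemma4p4 (b p s : R) (hb : 1 < b) (hs : s < p * b) :
  let beta := mkcls b (-1) in
  let alpha := mkcls p (- s) in
  let c := (p ^ 2 - s ^ 2 - b ^ 2 + 1) / (2 * (p * b - s)) in
  c = (dot alpha alpha - dot beta beta) / (2 * dot alpha beta) /\
  c < Rmin (p / b) (Rmin ((p - s) / (b - 1)) (b * p)) /\
  (big (csub alpha (cscale c beta)) /\
   (kahler (csub alpha (cscale c beta)) <-> s > c) /\
   (nef (csub alpha (cscale c beta)) <-> s >= c)) /\
  (dHYM_stable alpha beta <-> s > c) /\
  (dHYM_semistable alpha beta <-> s >= c).
Proof.
  intros beta alpha c.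
  assert (hD : 0 < p * b - s) by lra.
  assert (hc : c * (2 * (p * b - s)) = p ^ 2 - s ^ 2 - b ^ 2 + 1)
    by (unfold c; field; lra).
  clearbody c.
  assert (h1 : 2 * (p * b - s) * (p - c * b) = b*p^2 - 2*p*s + b*s^2 + b^3 - b).
  { transitivity (2*(p*b-s)*p - b*(c*(2*(p*b-s)))); [ring|]. rewrite hc. ring. }
  assert (hx : 0 < p - c * b).
  { assert (0 < b*p^2 - 2*p*s + b*s^2 + b^3 - b).
    { assert (b * (b*p^2 - 2*p*s + b*s^2) = (b*p - s)^2 + (b^2-1)*s^2) by ring.
      assert (0 <= (b*p - s)^2 + (b^2-1)*s^2).
      { apply Rplus_le_le_0_compat; [apply pow2_ge_0|apply Rmult_le_pos; [nra|apply pow2_ge_0]]. }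
      assert (0 <= b*p^2 - 2*p*s + b*s^2) by (apply (nonneg_of_mul b); lra).
      assert (0 < b^3 - b) by nra. lra. }
    apply (pos_of_mul (2 * (p * b - s))); lra. }
  assert (h2 : 2 * (p * b - s) * ((p - s) - c * (b - 1)) = (b+1)*(p-s)^2 + (b-1)*(b^2-1)).
  { transitivity (2*(p*b-s)*(p-s) - (b-1)*(c*(2*(p*b-s)))); [ring|]. rewrite hc. ring. }
  assert (hxy : 0 < (p - s) - c * (b - 1)).
  { assert (0 < (b+1)*(p-s)^2 + (b-1)*(b^2-1)).
    { assert (0 <= (b+1)*(p-s)^2) by (apply Rmult_le_pos; [lra|apply pow2_ge_0]).
      assert (0 < (b-1)*(b^2-1)) by (apply Rmult_lt_0_compat; nra). lra. }
    apply (pos_of_mul (2 * (p * b - s))); lra. }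
  assert (h3 : 2 * (p * b - s) * (b * p - c) = (b^2-1)*p^2 + (b*p - s)^2 + b^2 - 1).
  { transitivity (2*(p*b-s)*(b*p) - (c*(2*(p*b-s)))); [ring|]. rewrite hc. ring. }
  assert (hbp : 0 < b * p - c).
  { assert (0 < (b^2-1)*p^2 + (b*p - s)^2 + b^2 - 1).
    { assert (0 <= (b^2-1)*p^2) by (apply Rmult_le_pos; [nra|apply pow2_ge_0]).
      assert (0 <= (b*p - s)^2) by apply pow2_ge_0. nra. }
    apply (pos_of_mul (2 * (p * b - s))); lra. }
  assert (hcot : cot_dHYM alpha beta = c).
  { unfold cot_dHYM, alpha, beta, dot; simpl. apply Rmult_eq_reg_r with (2 * (p * b - s)); [|lra].
    rewrite hc. field. lra. }
  assert (hgam : csub alpha (cscale c beta) = mkcls (p - c * b) (- (s - c))).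
  { unfold csub, cadd, cscale, alpha, beta; simpl. f_equal; ring. }
  assert (hcurv : forall Z, dot alpha Z - c * dot beta Z = dot (mkcls (p - c * b) (- (s - c))) Z).
  { intros Z. unfold dot, alpha, beta; simpl. ring. }
  assert (hkg : forall g, kahler g -> s >= c -> dot alpha g >= c * dot beta g).
  { intros g [_ hg] hsc. pose proof (hg _ curveE) as gE. pose proof (hg _ curveL) as gL.
    destruct g as [u v]; unfold dot, clsE, alpha, beta in *; simpl in *.
    assert (0 <= (p - c*b - (s - c)) * (u + v)) by (apply Rmult_le_pos; lra).
    assert (0 <= (s - c) * (-v)) by (apply Rmult_le_pos; lra).
    nra. }
  assert (hIm : forall g, kahler g -> Re2 alpha beta >= c * Im2 alpha beta).
  { intros. unfold Re2, Im2, alpha, beta, dot; simpl. nra. }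
  split.
  { unfold alpha, beta, dot; simpl. apply Rmult_eq_reg_r with (2 * (p * b - s)); [|lra].
    rewrite hc. field. lra. }
  split.
  { apply Rmin_glb_lt.
    - apply Rmult_lt_reg_r with b; [lra|]. unfold Rdiv. rewrite Rmult_assoc, Rinv_l; lra.
    - apply Rmin_glb_lt; [|lra].
      apply Rmult_lt_reg_r with (b - 1); [lra|]. unfold Rdiv. rewrite Rmult_assoc, Rinv_l; lra. }
  rewrite hgam.
  split; [split; [|split]|split].
  - destruct (Rlt_or_le c s) as [hlt|hge].
    + exists (mkcls (p - c * b) (- (s - c))), (mkcls 0 0). split; [apply kahler_xy; lra|].
      split; [exists nil; split; [constructor|reflexivity]|].
      unfold cadd; simpl. f_equal; ring.
    + set (x := p - c * b).
      exists (mkcls x (- (x/2))), (cscale (c - s + x/2) clsE). split; [apply kahler_xy; unfold x in *; lra|].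
      split.
      * exists ((c - s + x/2, clsE) :: nil). split.
        -- constructor; [simpl; split; [unfold x in *; lra|apply curveE]|constructor].
        -- unfold cadd, cscale, clsE; simpl. f_equal; ring.
      * unfold cadd, cscale, clsE; simpl. f_equal; ring.
  - split.
    + intros [_ h]. pose proof (h _ curveE) as hE. unfold dot, clsE in hE; simpl in hE. lra.
    + intros. apply kahler_xy; lra.
  - split.
    + intros h. pose proof (h _ curveE) as hE. unfold dot, clsE in hE; simpl in hE. lra.
    + intros hsc Z hZ. apply (curve_dot _ _ Z); auto; lra.
  - split.
    + intros [_ h]. pose proof (h _ curveE) as hE. rewrite hcot in hE. unfold dot, alpha, beta, clsE in hE; simpl in hE. lra.
    + intros hsc. split.
      * intros g hg. unfold Re1, Im1; rewrite hcot; split; [apply hkg; auto; lra|]. apply (hIm g hg).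
      * intros Z hZ. rewrite hcot. pose proof (hcurv Z).
        assert (HH : 0 <= s - c) by lra. assert (HH2 : s - c <= p - c * b) by lra.
        destruct (curve_dot (p - c * b) (s - c) Z HH HH2 hx hZ) as [_ HH3].
        specialize (HH3 ltac:(lra) ltac:(lra)). lra.
  - split.
    + intros [_ h]. pose proof (h _ curveE) as hE. rewrite hcot in hE. unfold dot, alpha, beta, clsE in hE; simpl in hE. lra.
    + intros hsc. split.
      * intros g hg. unfold Re1, Im1; rewrite hcot; split; [apply hkg; auto|]. apply (hIm g hg).
      * intros Z hZ. rewrite hcot. pose proof (hcurv Z).
        assert (HH : 0 <= s - c) by lra. assert (HH2 : s - c <= p - c * b) by lra.
        destruct (curve_dot (p - c * b) (s - c) Z HH HH2 hx hZ) as [HH3 _]. lra.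
Qed.
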